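(* Let $G=H\times K$ where $H$ and $K$ are finitely generated groups. Then $\alpha_G\preccurlyeq\alpha_H\cdot\alpha_K$. If, in addition, $H$ and $K$ are characteristic in $G$, then $\alpha_G\sim\alpha_H\cdot\alpha_K$.
   Context: For a finitely generated group $G$ with finite generating set $\Sigma$, the automorphic growth function sends $n$ to the number of $\operatorname{Aut}(G)$-orbits of $G$ containing an element of word length at most $n$; $\alpha_G$ denotes its $\sim$-class (independent of $\Sigma$). For non-decreasing non-zero $f,g\colon\mathbb{N}\to\mathbb{N}$, $f\preccurlyeq g$ means there is $\lambda\in\mathbb{N}\setminus\{0\}$ with $f(n)\le\lambda g(\lambda n+\lambda)+\lambda$ for all $n$, and $f\sim g$ means both directions hold; products of classes are taken pointwise on representatives (well defined). *)

(* Defs.v *)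
From Stdlib Require Import List Arith Lia.
Import ListNotations.

Record Grp := {
  gcar :> Type;
  gmul : gcar -> gcar -> gcar;
  gone : gcar;
  ginv : gcar -> gcar;
  gassoc : forall x y z, gmul x (gmul y z) = gmul (gmul x y) z;
  gone_l : forall x, gmul gone x = x;
  ginv_l : forall x, gmul (ginv x) x = gone
}.

Arguments gmul {g} _ _.
Arguments gone {g}.
Arguments ginv {g} _.

Definition prodGrp (H K : Grp) : Grp.
Proof.
  refine {| gcar := (gcar H * gcar K)%type;
            gmul := fun a b => (gmul (fst a) (fst b), gmul (snd a) (snd b));
            gone := (@gone H, @gone K);
            ginv := fun a => (ginv (fst a), ginv (snd a)) |}.
  - intros [a1 a2] [b1 b2] [c1 c2]; simpl; now rewrite !gassoc.
  - intros [a1 a2]; simpl; now rewrite !gone_l.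
  - intros [a1 a2]; simpl; now rewrite !ginv_l.
Defined.

(* Evaluation of a word over Sigma^{+-1}: (true, s) stands for s, (false, s) for s^-1. *)
Definition eval_word {G : Grp} (w : list (bool * G)) : G :=
  fold_right (fun (p : bool * G) (acc : G) => gmul (if fst p then snd p else ginv (snd p)) acc) (@gone G) w.

Definition in_ball (G : Grp) (S : list G) (n : nat) (g : G) : Prop :=
  exists w : list (bool * G),
    length w <= n /\ (forall p, In p w -> In (snd p) S) /\ eval_word w = g.

Definition generates (G : Grp) (S : list G) : Prop :=
  forall g : G, exists n, in_ball G S n g.

Definition is_hom (G : Grp) (f : G -> G) : Prop :=
  forall x y : G, f (gmul x y) = gmul (f x) (f y).

Definition is_aut (G : Grp) (f : G -> G) : Prop :=
  is_hom G f /\ exists g : G -> G, (forall x, g (f x) = x) /\ (forall y, f (g y) = y).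

Definition same_orbit (G : Grp) (x y : G) : Prop :=
  exists f, is_aut G f /\ f x = y.

(* k is the number of Aut(G)-orbits of G containing an element of word
   length at most n (w.r.t. S): witnessed by k elements of the ball lying in
   pairwise distinct orbits, whose orbits cover the ball. *)
Definition aut_growth_at (G : Grp) (S : list G) (n k : nat) : Prop :=
  exists l : list G,
    length l = k /\
    (forall x, In x l -> in_ball G S n x) /\
    (forall i j, i < k -> j < k -> i <> j ->
       forall d : G, ~ same_orbit G (nth i l d) (nth j l d)) /\
    (forall g, in_ball G S n g -> exists x, In x l /\ same_orbit G g x).

Definition gpreceq (f g : nat -> nat) : Prop :=
  exists lam : nat, 0 < lam /\ forall n, f n <= lam * g (lam * n + lam) + lam.

Definition gsim (f g : nat -> nat) : Prop := gpreceq f g /\ gpreceq g f.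

Definition characteristic (G : Grp) (P : G -> Prop) : Prop :=
  forall phi, is_aut G phi ->
    (forall x, P x -> P (phi x)) /\ (forall y, P y -> exists x, P x /\ phi x = y).

Definition firstFactor (H K : Grp) : prodGrp H K -> Prop := fun g => snd g = gone.
Definition secondFactor (H K : Grp) : prodGrp H K -> Prop := fun g => fst g = gone.

(* Main.v *)
Require Import Defs.
From Stdlib Require Import List Arith Lia.
Import ListNotations.
Arguments gassoc {g}.
Arguments gone_l {g}.
Arguments ginv_l {g}.

Lemma pigeon k m (F:nat->nat) : (forall i, i<k -> F i < m) ->
  (forall i j, i<k -> j<k -> F i = F j -> i = j) -> k <= m.
Proof.
  intros H H0.
  assert (length (map F (seq 0 k)) <= length (seq 0 m)).
  { apply NoDup_incl_length.
    - apply NoDup_map_NoDup_ForallPairs; [|apply seq_NoDup].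
      intros a b Ha Hb; apply in_seq in Ha; apply in_seq in Hb; apply H0; lia.
    - intros y Hy; apply in_map_iff in Hy; destruct Hy as [i [<- Hi]].
      apply in_seq in Hi; apply in_seq; specialize (H i); lia. }
  rewrite length_map, !length_seq in H1; exact H1.
Qed.

Lemma fin_choice (P : nat -> nat -> Prop) k :
  (forall i, i<k -> exists j, P i j) -> exists F, forall i, i<k -> P i (F i).
Proof.
  induction k; intros H.
  - exists (fun _ => 0); intros; lia.
  - destruct IHk as [F HF]; [intros; apply H; lia|].
    destruct (H k) as [j Hj]; [lia|].
    exists (fun i => if Nat.eq_dec i k then j else F i). intros i Hi.
    destruct (Nat.eq_dec i k); [subst; auto | apply HF; lia].
Qed.

Section GrpLemmas.
Variable G : Grp.

Lemma mul_inv_r (x:G) : gmul x (ginv x) = gone.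
Proof.
  rewrite <- (gone_l (gmul x (ginv x))).
  rewrite <- (ginv_l (ginv x)) at 1.
  rewrite <- gassoc. rewrite (gassoc (ginv x) x (ginv x)).
  rewrite ginv_l, gone_l. apply ginv_l.
Qed.

Lemma mul_1r (x:G) : gmul x gone = x.
Proof. rewrite <- (ginv_l x), gassoc, mul_inv_r. apply gone_l. Qed.

Lemma inv_uniq (a b : G) : gmul a b = gone -> a = ginv b.
Proof.
  intros H. rewrite <- (mul_1r a), <- (mul_inv_r b), gassoc, H. apply gone_l.
Qed.

Lemma inv_mul (x y : G) : ginv (gmul x y) = gmul (ginv y) (ginv x).
Proof.
  symmetry; apply inv_uniq.
  rewrite <- gassoc, (gassoc (ginv x) x y), ginv_l, gone_l. apply ginv_l.
Qed.

Lemma inv_inv (x : G) : ginv (ginv x) = x.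
Proof. symmetry; apply inv_uniq, mul_inv_r. Qed.

Lemma inv_one : ginv (@gone G) = gone.
Proof. symmetry; apply inv_uniq, gone_l. Qed.

Lemma eval_app (w1 w2 : list (bool * G)) :
  eval_word (w1 ++ w2) = gmul (eval_word w1) (eval_word w2).
Proof.
  induction w1 as [|p w IH]; simpl.
  - now rewrite gone_l.
  - now rewrite IH, gassoc.
Qed.

Definition flip (p : bool * G) : bool * G := (negb (fst p), snd p).

Lemma eval_inv (w : list (bool * G)) :
  eval_word (rev (map flip w)) = ginv (eval_word w).
Proof.
  induction w as [|p w IH]; simpl.
  - now rewrite inv_one.
  - rewrite eval_app, IH, inv_mul. f_equal. simpl.
    rewrite mul_1r. destruct p as [[|] s]; simpl; auto. now rewrite inv_inv.
Qed.

Variable S : list G.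

Lemma ball_mono n m (g:G) : in_ball G S n g -> n <= m -> in_ball G S m g.
Proof. intros [w [H1 [H2 H3]]] Hle. exists w; repeat split; auto; lia. Qed.

Lemma ball_mul a b (x y : G) : in_ball G S a x -> in_ball G S b y -> in_ball G S (a+b) (gmul x y).
Proof.
  intros [w [H1 [H2 H3]]] [v [K1 [K2 K3]]]. exists (w ++ v); repeat split.
  - rewrite length_app; lia.
  - intros p Hp; apply in_app_or in Hp; destruct Hp; auto.
  - rewrite eval_app; congruence.
Qed.

Lemma ball_inv a (x : G) : in_ball G S a x -> in_ball G S a (ginv x).
Proof.
  intros [w [H1 [H2 H3]]]. exists (rev (map flip w)); repeat split.
  - rewrite length_rev, length_map; lia.
  - intros p Hp. apply in_rev in Hp. apply in_map_iff in Hp.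
    destruct Hp as [q [<- Hq]]. simpl. auto.
  - rewrite eval_inv; congruence.
Qed.

Lemma ball_one : in_ball G S 0 gone.
Proof. exists []; repeat split; simpl; auto; intros p []. Qed.

Lemma ball_gen s : In s S -> in_ball G S 1 s.
Proof.
  intros H. exists [(true, s)]; repeat split; simpl; auto.
  - intros p [<-|[]]; auto.
  - apply mul_1r.
Qed.

Lemma orbit_refl (x : G) : same_orbit G x x.
Proof.
  exists (fun y => y); split; auto. split; [intros a b; reflexivity|].
  exists (fun y => y); auto.
Qed.

Lemma aut_inv f g : is_aut G f -> (forall x, g (f x) = x) -> (forall y, f (g y) = y) -> is_aut G g.
Proof.
  intros [Hh _] H1 H2. split.
  - intros x y. rewrite <- (H2 x), <- (H2 y) at 1. rewrite <- Hh. apply H1.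
  - exists f; auto.
Qed.

Lemma orbit_sym (x y : G) : same_orbit G x y -> same_orbit G y x.
Proof.
  intros [f [Hf Hfx]]. destruct Hf as [Hh [g [H1 H2]]] eqn:E.
  exists g; split.
  - eapply aut_inv; eauto.
  - rewrite <- Hfx; auto.
Qed.

Lemma orbit_trans (x y z : G) : same_orbit G x y -> same_orbit G y z -> same_orbit G x z.
Proof.
  intros [f [[Hf [f' [F1 F2]]] Hfx]] [g [[Hg [g' [G1 G2]]] Hgy]].
  exists (fun a => g (f a)); split.
  - split. + intros a b; now rewrite Hf, Hg.
    + exists (fun a => f' (g' a)); split; intros; [now rewrite G1, F1 | now rewrite F2, G2].
  - now rewrite Hfx.
Qed.

End GrpLemmas.

Lemma bound_list {A} (L : list A) (P : nat -> A -> Prop) :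
  (forall n m a, P n a -> n <= m -> P m a) ->
  (forall a, In a L -> exists n, P n a) -> exists C, forall a, In a L -> P C a.
Proof.
  intros Hm. induction L as [|x L IH]; intros H.
  - exists 0; intros a [].
  - destruct IH as [C HC]; [intros; apply H; simpl; auto|].
    destruct (H x) as [n Hn]; [simpl; auto|].
    exists (Nat.max C n). intros a [<-|Ha]; eapply Hm; eauto; lia.
Qed.

Lemma transport (G1 G2 : Grp) (S1 : list G1) (S2 : list G2) (f : G1 -> G2) C :
  (forall x y, f (gmul x y) = gmul (f x) (f y)) ->
  (forall x, f (ginv x) = ginv (f x)) -> f gone = gone ->
  (forall s, In s S1 -> in_ball G2 S2 C (f s)) ->
  forall n g, in_ball G1 S1 n g -> in_ball G2 S2 (C*n) (f g).
Proof.
  intros Hm Hi H1 HS n g [w [Hl [Hw <-]]].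
  apply ball_mono with (C * length w); [|nia].
  clear Hl. induction w as [|p w IH]; simpl.
  - rewrite H1, Nat.mul_0_r. apply ball_one.
  - rewrite Hm. replace (C * S (length w)) with (C + C * length w) by lia.
    apply ball_mul; [|apply IH; intros; apply Hw; simpl; auto].
    assert (Hp : In (snd p) S1) by (apply Hw; simpl; auto).
    destruct p as [[|] s]; simpl in *; auto.
    rewrite Hi; apply ball_inv; auto.
Qed.
Section Prod.
Variables H K : Grp.
Notation G := (prodGrp H K).

Lemma prod_orbit (x y : G) : same_orbit H (fst x) (fst y) -> same_orbit K (snd x) (snd y) ->
  same_orbit G x y.
Proof.
  intros [a [[Ha [a' [A1 A2]]] Hax]] [b [[Hb [b' [B1 B2]]] Hbx]].
  exists (fun z : G => (a (fst z), b (snd z)) : G). split.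
  - split.
    + intros u v; simpl. now rewrite Ha, Hb.
    + exists (fun z : G => (a' (fst z), b' (snd z)) : G); split; intros [u v]; simpl;
        [now rewrite A1, B1 | now rewrite A2, B2].
  - destruct y; simpl in *; congruence.
Qed.

Lemma char_orbit (x y : G) :
  characteristic G (firstFactor H K) -> characteristic G (secondFactor H K) ->
  same_orbit G x y -> same_orbit H (fst x) (fst y) /\ same_orbit K (snd x) (snd y).
Proof.
  intros C1 C2 [phi [Haut Hxy]].
  pose proof Haut as [Hh [psi [P1 P2]]].
  destruct (C1 phi Haut) as [C1a C1b].
  destruct (C2 phi Haut) as [C2a C2b].
  assert (E1 : forall h : H, snd (phi ((h, gone) : G)) = gone).
  { intros h; apply (C1a (h, gone)); reflexivity. }
  assert (E2 : forall k : K, fst (phi ((gone, k) : G)) = gone).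
  { intros k; apply (C2a (gone, k)); reflexivity. }
  assert (F1 : forall h : H, snd (psi ((h, gone) : G)) = gone).
  { intros h. destruct (C1b (h, gone) eq_refl) as [z [Hz Ez]].
    rewrite <- Ez, P1. exact Hz. }
  assert (F2 : forall k : K, fst (psi ((gone, k) : G)) = gone).
  { intros k. destruct (C2b (gone, k) eq_refl) as [z [Hz Ez]].
    rewrite <- Ez, P1. exact Hz. }
  assert (Dec : forall z : G, phi z = (fst (phi (fst z, gone)), snd (phi (gone, snd z)))).
  { intros [h k].
    transitivity (phi (gmul ((h, gone) : G) ((gone, k) : G))).
    { f_equal. simpl. now rewrite mul_1r, gone_l. }
    rewrite Hh. simpl.
    rewrite E1, E2, mul_1r, gone_l. reflexivity. }
  split.
  - exists (fun h => fst (phi (h, gone))). split.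
    + split.
      * intros u v.
        replace ((gmul u v, gone) : G) with (gmul ((u, gone) : G) ((v, gone) : G))
          by (simpl; now rewrite gone_l).
        now rewrite Hh.
      * exists (fun h => fst (psi (h, gone))). split; intros u.
        -- pose proof (E1 u) as e. destruct (phi (u, gone)) as [a b] eqn:Ep. simpl in *. subst b. rewrite <- Ep. now rewrite P1.
        -- pose proof (F1 u) as e. destruct (psi (u, gone)) as [a b] eqn:Ep. simpl in *. subst b. rewrite <- Ep. now rewrite P2.
    + rewrite <- Hxy, (Dec x). reflexivity.
  - exists (fun k => snd (phi (gone, k))). split.
    + split.
      * intros u v.
        replace ((gone, gmul u v) : G) with (gmul ((gone, u) : G) ((gone, v) : G))
          by (simpl; now rewrite gone_l).
        now rewrite Hh.
      * exists (fun k => snd (psi (gone, k))). split; intros u.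
        -- pose proof (E2 u) as e. destruct (phi (gone, u)) as [b a] eqn:Ep. simpl in *. subst b. rewrite <- Ep. now rewrite P1.
        -- pose proof (F2 u) as e. destruct (psi (gone, u)) as [b a] eqn:Ep. simpl in *. subst b. rewrite <- Ep. now rewrite P2.
    + rewrite <- Hxy, (Dec x). reflexivity.
Qed.
End Prod.
Lemma divmod_inj a b a' b' q : b < q -> b' < q -> a*q+b = a'*q+b' -> a = a' /\ b = b'.
Proof.
  intros Hb Hb' E. destruct (lt_eq_lt_dec a a') as [[Hl|Hl]|Hl].
  - exfalso. assert (a*q + q <= a'*q) by nia. lia.
  - subst; lia.
  - exfalso. assert (a'*q + q <= a*q) by nia. lia.
Qed.

Section Main.
Variables (H K : Grp) (SH : list H) (SK : list K) (SG : list (prodGrp H K)) (fH fK fG : nat -> nat).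
Hypotheses (gH : generates H SH) (gK : generates K SK) (gG : generates (prodGrp H K) SG)
  (aH : forall n, aut_growth_at H SH n (fH n))
  (aK : forall n, aut_growth_at K SK n (fK n))
  (aG : forall n, aut_growth_at (prodGrp H K) SG n (fG n)).

Lemma part1 : exists C, forall n m, C*n <= m -> fG n <= fH m * fK m.
Proof.
  destruct (bound_list SG (fun n s => in_ball H SH n (fst s) /\ in_ball K SK n (snd s)))
    as [C HC].
  { intros n m a [A B] Hle; split; eapply ball_mono; eauto. }
  { intros s _. destruct (gH (fst s)) as [n1 B1]. destruct (gK (snd s)) as [n2 B2].
    exists (Nat.max n1 n2); split; eapply ball_mono; eauto; lia. }
  exists C. intros n m Hm.
  destruct (aG n) as [lG [LG [BG [DG CG]]]].
  destruct (aH m) as [lH [LH [BH [DH CH]]]].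
  destruct (aK m) as [lK [LK [BK [DK CK]]]].
  destruct (fin_choice (fun i j => exists a b, a < fH m /\ b < fK m /\ j = a * fK m + b /\
      same_orbit H (fst (nth i lG gone)) (nth a lH gone) /\
      same_orbit K (snd (nth i lG gone)) (nth b lK gone)) (fG n)) as [F HF].
  { intros i Hi. set (x := nth i lG gone).
    assert (Bx : in_ball _ SG n x) by (apply BG; apply nth_In; lia).
    assert (B1 : in_ball H SH m (fst x)).
    { eapply ball_mono; [|exact Hm].
      eapply (transport (prodGrp H K) H SG SH fst C); eauto; try reflexivity.
      intros s Hs; apply HC; auto. }
    assert (B2 : in_ball K SK m (snd x)).
    { eapply ball_mono; [|exact Hm].
      eapply (transport (prodGrp H K) K SG SK snd C); eauto; try reflexivity.
      intros s Hs; apply HC; auto. }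
    destruct (CH _ B1) as [h [Ih Oh]]. destruct (In_nth _ _ gone Ih) as [a [Ha Ea]].
    destruct (CK _ B2) as [k [Ik Ok]]. destruct (In_nth _ _ gone Ik) as [b [Hb Eb]].
    exists (a * fK m + b), a, b. repeat split; try lia; congruence. }
  apply (pigeon (fG n) (fH m * fK m) F).
  - intros i Hi. destruct (HF i Hi) as [a [b [Ha [Hb [E _]]]]]. nia.
  - intros i i' Hi Hi' E.
    destruct (HF i Hi) as [a [b [Ha [Hb [Ei [O1 O2]]]]]].
    destruct (HF i' Hi') as [a' [b' [Ha' [Hb' [Ei' [O1' O2']]]]]].
    rewrite Ei, Ei' in E. apply divmod_inj in E; [|lia|lia]. destruct E; subst a' b'.
    destruct (Nat.eq_dec i i') as [|Hne]; auto. exfalso.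
    apply (DG i i' Hi Hi' Hne gone).
    apply prod_orbit; eapply orbit_trans; eauto; apply orbit_sym; auto.
Qed.

Lemma part2 : characteristic (prodGrp H K) (firstFactor H K) ->
   characteristic (prodGrp H K) (secondFactor H K) ->
   exists D, forall n m, D*n + D*n <= m -> fH n * fK n <= fG m.
Proof.
  intros C1 C2.
  destruct (bound_list SH (fun n s => in_ball (prodGrp H K) SG n ((s, gone) : prodGrp H K)))
    as [D1 HD1].
  { intros n m a A Hle; eapply ball_mono; eauto. }
  { intros s _. apply gG. }
  destruct (bound_list SK (fun n s => in_ball (prodGrp H K) SG n ((gone, s) : prodGrp H K)))
    as [D2 HD2].
  { intros n m a A Hle; eapply ball_mono; eauto. }
  { intros s _. apply gG. }
  exists (Nat.max D1 D2). set (D := Nat.max D1 D2). intros n m Hm.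
  destruct (aG m) as [lG [LG [BG [DG CG]]]].
  destruct (aH n) as [lH [LH [BH [DH CH]]]].
  destruct (aK n) as [lK [LK [BK [DK CK]]]].
  set (q := fK n).
  destruct (fin_choice (fun p j => j < fG m /\
      same_orbit (prodGrp H K) ((nth (p / q) lH gone, nth (p mod q) lK gone) : prodGrp H K)
        (nth j lG gone)) (fH n * fK n)) as [F HF].
  { intros p Hp.
    assert (Hq : q <> 0) by (unfold q; intro E; rewrite E in Hp; lia).
    assert (Ha : p / q < fH n) by (apply Nat.Div0.div_lt_upper_bound; unfold q in *; lia).
    assert (Hb : p mod q < fK n) by (apply Nat.mod_upper_bound; auto).
    set (h := nth (p / q) lH gone). set (k := nth (p mod q) lK gone).
    assert (B1 : in_ball (prodGrp H K) SG (D*n) ((h, gone) : prodGrp H K)).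
    { apply (transport H (prodGrp H K) SH SG (fun h => (h, gone) : prodGrp H K) D).
      - intros x y; simpl; now rewrite gone_l.
      - intros x; simpl; now rewrite inv_one.
      - reflexivity.
      - intros s Hs; eapply ball_mono; [apply HD1; auto|]; unfold D; lia.
      - apply BH; apply nth_In; lia. }
    assert (B2 : in_ball (prodGrp H K) SG (D*n) ((gone, k) : prodGrp H K)).
    { apply (transport K (prodGrp H K) SK SG (fun k => (gone, k) : prodGrp H K) D).
      - intros x y; simpl; now rewrite gone_l.
      - intros x; simpl; now rewrite inv_one.
      - reflexivity.
      - intros s Hs; eapply ball_mono; [apply HD2; auto|]; unfold D; lia.
      - apply BK; apply nth_In; lia. }
    assert (B : in_ball (prodGrp H K) SG m ((h, k) : prodGrp H K)).
    { eapply ball_mono; [|exact Hm].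
      pose proof (ball_mul _ _ _ _ _ _ B1 B2) as B3. simpl in B3.
      rewrite mul_1r, gone_l in B3. exact B3. }
    destruct (CG _ B) as [r [Ir Or]]. destruct (In_nth _ _ gone Ir) as [j [Hj Ej]].
    exists j. split; [lia|]. rewrite Ej. exact Or. }
  apply (pigeon (fH n * fK n) (fG m) F).
  - intros p Hp. apply HF; auto.
  - intros p p' Hp Hp' E.
    assert (Hq : q <> 0) by (unfold q; intro E'; rewrite E' in Hp; lia).
    assert (Ha : p / q < fH n) by (apply Nat.Div0.div_lt_upper_bound; unfold q in *; lia).
    assert (Hb : p mod q < fK n) by (apply Nat.mod_upper_bound; auto).
    assert (Ha' : p' / q < fH n) by (apply Nat.Div0.div_lt_upper_bound; unfold q in *; lia).
    assert (Hb' : p' mod q < fK n) by (apply Nat.mod_upper_bound; auto).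
    destruct (HF p Hp) as [_ O]. destruct (HF p' Hp') as [_ O'].
    rewrite E in O. pose proof (orbit_trans _ _ _ _ O (orbit_sym _ _ _ O')) as O2.
    destruct (char_orbit H K _ _ C1 C2 O2) as [Oh Ok]. simpl in Oh, Ok.
    assert (E1 : p / q = p' / q).
    { destruct (Nat.eq_dec (p / q) (p' / q)) as [|Hne]; auto. exfalso.
      apply (DH _ _ Ha Ha' Hne gone Oh). }
    assert (E2 : p mod q = p' mod q).
    { destruct (Nat.eq_dec (p mod q) (p' mod q)) as [|Hne]; auto. exfalso.
      apply (DK _ _ Hb Hb' Hne gone Ok). }
    rewrite (Nat.div_mod_eq p q), (Nat.div_mod_eq p' q), E1, E2. reflexivity.
Qed.

End Main.

Theorem mainTheorem15 (H K : Grp) (SH : list H) (SK : list K)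
  (SG : list (prodGrp H K)) (fH fK fG : nat -> nat) :
  generates H SH -> generates K SK -> generates (prodGrp H K) SG ->
  (forall n, aut_growth_at H SH n (fH n)) ->
  (forall n, aut_growth_at K SK n (fK n)) ->
  (forall n, aut_growth_at (prodGrp H K) SG n (fG n)) ->
  gpreceq fG (fun n => fH n * fK n) /\
  (characteristic (prodGrp H K) (firstFactor H K) ->
   characteristic (prodGrp H K) (secondFactor H K) ->
   gsim fG (fun n => fH n * fK n)).
Proof.
  intros gH gK gG aH aK aG.
  assert (P1 : gpreceq fG (fun n => fH n * fK n)).
  { destruct (part1 H K SH SK SG fH fK fG gH gK aH aK aG) as [C HC].
    exists (S C). split; [lia|]. intros n.
    specialize (HC n (S C * n + S C) ltac:(nia)). nia. }
  split; auto. intros C1 C2. split; auto.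
  destruct (part2 H K SH SK SG fH fK fG gG aH aK aG C1 C2) as [D HD].
  exists (S (D + D)). split; [lia|]. intros n.
  specialize (HD n (S (D + D) * n + S (D + D)) ltac:(nia)). nia.
Qed.
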